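(* Let $(X,x)$ be a pointed diffeological space. The map $\alpha:\hat{T}_x(X)\to T'_x(X)$ defined by $\alpha(F)([f]+I_x^2(X))=F([f])$ is an isomorphism of vector spaces.
   Context: A diffeological space is a set $X$ together with, for every open subset $U$ of every $\mathbb{R}^n$, a set of functions $U\to X$ called plots, such that constant maps are plots, the composite of a plot with a smooth map between open subsets of Euclidean spaces is a plot, and a function which is locally a plot is a plot; smooth maps send plots to plots. A subset of $X$ is $D$-open if its preimage under every plot is open. For a diffeological space $B$, $C^\infty(B,\mathbb{R})$ carries the functional diffeology: a map $U\to C^\infty(B,\mathbb{R})$ is a plot iff its adjoint $U\times B\to\mathbb{R}$ is smooth. Let $G_x(X)=\operatorname{colim}_B C^\infty(B,\mathbb{R})$, the colimit taken in the category of diffeological spaces over all $D$-open subsets $B$ of $X$ containing $x$ (with the sub-diffeology), along restriction maps; it is a diffeological $\mathbb{R}$-algebra (germs of smooth functions at $x$) with smooth evaluation map $[f]\mapsto f(x)$. An external tangent vector at $x$ is a smooth linear map $F:G_x(X)\to\mathbb{R}$ satisfying $F([f][g])=F([f])g(x)+f(x)F([g])$; $\hat{T}_x(X)$ is the vector space of these. Let $I_x(X)$ be the kernel of evaluation with the sub-diffeology, $I_x(X)/I_x^2(X)$ the quotient vector space with the quotient diffeology, and $T'_x(X)$ the vector space of smooth linear maps $I_x(X)/I_x^2(X)\to\mathbb{R}$. *)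

(* Defs.v *)
From HB Require Import structures.
From mathcomp Require Import all_boot all_order all_algebra.
From mathcomp Require Import all_classical all_reals all_analysis.
Set Implicit Arguments. Unset Strict Implicit. Unset Printing Implicit Defensive.
Import Order.TTheory GRing.Theory Num.Theory.
Import numFieldNormedType.Exports.
Local Open Scope classical_set_scope.
Local Open Scope ring_scope.

Definition iterD {R : realType} {V W : normedModType R} (vs : seq V) (f : V -> W)
  : V -> W := foldr (fun v g => 'D_v g) f vs.

Definition smooth_on {R : realType} {V W : normedModType R} (U : set V) (f : V -> W)
  : Prop :=
  forall vs : seq V,
    (forall a, U a -> forall v : V, derivable (iterD vs f) a v) /\
    (forall a, U a -> {for a, continuous (iterD vs f)}).

(* Diffeological spaces.  A plot U -> X (U open in R^n) is represented by *)
(* a total map 'rV_n -> X, only its values on U mattering.            *)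

Record diffeology (R : realType) (X : Type) := Diffeology {
  plot : forall n : nat, set 'rV[R]_n -> ('rV[R]_n -> X) -> Prop;
  plot_open : forall n U p, @plot n U p -> open U;
  plot_ext : forall n U (p q : 'rV[R]_n -> X),
      plot U p -> (forall u, U u -> p u = q u) -> plot U q;
  plot_const : forall n (U : set 'rV[R]_n) (y : X), open U -> plot U (fun _ => y);
  plot_comp : forall m n (U : set 'rV[R]_m) (V : set 'rV[R]_n)
      (p : 'rV[R]_n -> X) (F : 'rV[R]_m -> 'rV[R]_n),
      plot V p -> open U -> smooth_on U F -> (forall u, U u -> V (F u)) ->
      plot U (p \o F);
  plot_local : forall n (U : set 'rV[R]_n) (p : 'rV[R]_n -> X), open U ->
      (forall u, U u -> exists W : set 'rV[R]_n,
           [/\ open W, W u, W `<=` U & plot W p]) ->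
      plot U p
}.

Section Germs.
Context {R : realType} {X : Type} (D : diffeology R X) (x : X).

Definition Dopen (A : set X) : Prop :=
  forall n (U : set 'rV[R]_n) p, plot D U p -> open [set u | U u /\ A (p u)].

Definition smooth_fun (B : set X) (f : X -> R) : Prop :=
  forall n (U : set 'rV[R]_n) p, plot D U p -> (forall u, U u -> B (p u)) ->
    smooth_on U (f \o p).

(* Q : W -> C^oo(B,R) is a plot of the functional diffeology:
   its adjoint W x B -> R is smooth (W with its standard diffeology as an
   open subset of R^n, B with the sub-diffeology, product diffeology). *)
Definition fplot (B : set X) n (W : set 'rV[R]_n) (Q : 'rV[R]_n -> X -> R) : Prop :=
  [/\ open W,
      (forall w, W w -> smooth_fun B (Q w)) &
      forall m (V : set 'rV[R]_m) (q1 : 'rV[R]_m -> 'rV[R]_n) (q2 : 'rV[R]_m -> X),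
        open V -> smooth_on V q1 -> (forall v, V v -> W (q1 v)) ->
        plot D V q2 -> (forall v, V v -> B (q2 v)) ->
        smooth_on V (fun v => Q (q1 v) (q2 v))].

(* representatives (B, f) of elements of the disjoint union of the C^oo(B,R) *)
Definition pre := (set X * (X -> R))%type.

Definition valid (a : pre) : Prop := [/\ Dopen a.1, a.1 x & smooth_fun a.1 a.2].

(* the equivalence relation generated by the restriction maps *)
Definition germ_rel (a b : pre) : Prop :=
  exists B : set X, [/\ Dopen B, B x, B `<=` a.1 `&` b.1 &
                       forall y, B y -> a.2 y = b.2 y].

Definition cls (a : pre) : set pre := [set b | valid b /\ germ_rel a b].

Definition is_germ (c : set pre) : Prop := exists a, valid a /\ c = cls a.

(* colimit diffeology on G_x(X): final diffeology for the maps C^oo(B,R) -> G_x(X)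
   (plots are maps which locally are constant or lift to a plot of some C^oo(B,R)) *)
Definition germ_plot n (U : set 'rV[R]_n) (P : 'rV[R]_n -> set pre) : Prop :=
  [/\ open U, (forall u, U u -> is_germ (P u)) &
      forall u, U u -> exists W : set 'rV[R]_n,
        [/\ open W, W u, W `<=` U &
            (exists c, forall w, W w -> P w = c) \/
            exists (B : set X) (Q : 'rV[R]_n -> X -> R),
              [/\ Dopen B, B x, fplot B W Q &
                  forall w, W w -> P w = cls (B, Q w)]]].

Definition germ_op2 (op : R -> R -> R) (c d : set pre) : set pre :=
  [set p | exists a b, [/\ valid a, valid b, c = cls a, d = cls b &
                          cls (a.1 `&` b.1, fun y => op (a.2 y) (b.2 y)) p]].
Definition germ_add := germ_op2 +%R.
Definition germ_mul := germ_op2 *%R.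
Definition germ_scale (k : R) (c : set pre) : set pre :=
  [set p | exists a, [/\ valid a, c = cls a & cls (a.1, fun y => k * a.2 y) p]].
Definition germ0 : set pre := cls (setT, fun _ => 0).

Definition germ_ev (c : set pre) : R :=
  xget 0 [set r | exists a, [/\ valid a, c = cls a & r = a.2 x]].

Definition Ix (c : set pre) : Prop := is_germ c /\ germ_ev c = 0.
Definition Ix2 (c : set pre) : Prop :=
  exists s : seq (set pre * set pre),
    (forall gh, gh \in s -> Ix gh.1 /\ Ix gh.2) /\
    c = foldr (fun gh acc => germ_add (germ_mul gh.1 gh.2) acc) germ0 s.

Definition qcls (g : set pre) : set (set pre) :=
  [set c | Ix c /\ Ix2 (germ_add c (germ_scale (-1) g))].
Definition is_q (xi : set (set pre)) : Prop := exists g, Ix g /\ xi = qcls g.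
Definition q_add (xi eta : set (set pre)) : set (set pre) :=
  [set c | exists g h, [/\ Ix g, Ix h, xi = qcls g, eta = qcls h &
                          qcls (germ_add g h) c]].
Definition q_scale (k : R) (xi : set (set pre)) : set (set pre) :=
  [set c | exists g, [/\ Ix g, xi = qcls g & qcls (germ_scale k g) c]].

(* quotient diffeology on I_x/I_x^2 (I_x with the sub-diffeology of G_x) *)
Definition q_plot n (U : set 'rV[R]_n) (Xi : 'rV[R]_n -> set (set pre)) : Prop :=
  [/\ open U, (forall u, U u -> is_q (Xi u)) &
      forall u, U u -> exists (W : set 'rV[R]_n) (P : 'rV[R]_n -> set pre),
        [/\ open W, W u, W `<=` U, germ_plot W P &
            forall w, W w -> Ix (P w) /\ Xi w = qcls (P w)]].

Definition That (F : set pre -> R) : Prop :=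
  [/\ (forall n (U : set 'rV[R]_n) P, germ_plot U P -> smooth_on U (F \o P)),
      (forall c d, is_germ c -> is_germ d -> F (germ_add c d) = F c + F d),
      (forall k c, is_germ c -> F (germ_scale k c) = k * F c) &
      (forall c d, is_germ c -> is_germ d ->
         F (germ_mul c d) = F c * germ_ev d + germ_ev c * F d)].

Definition Tprime (T : set (set pre) -> R) : Prop :=
  [/\ (forall n (U : set 'rV[R]_n) Xi, q_plot U Xi -> smooth_on U (T \o Xi)),
      (forall xi eta, is_q xi -> is_q eta -> T (q_add xi eta) = T xi + T eta) &
      (forall k xi, is_q xi -> T (q_scale k xi) = k * T xi)].

Definition alpha (F : set pre -> R) (xi : set (set pre)) : R := F (xget germ0 xi).

End Germs.

(* Main.v *)
Require Import Defs.
From HB Require Import structures.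
From mathcomp Require Import all_boot all_order all_algebra.
From mathcomp Require Import all_classical all_reals all_analysis.
From mathcomp Require Import ring.
Import Order.TTheory GRing.Theory Num.Theory.
Import numFieldNormedType.Exports.
Set Implicit Arguments. Unset Strict Implicit.
Local Open Scope classical_set_scope.
Local Open Scope ring_scope.

Section Smooth.
Context {R : realType} {V : normedModType R}.
Implicit Types (U : set V) (f g : V -> R).

Definition Pn U k f := forall vs : seq V, (seq.size vs <= k)%N ->
  (forall a, U a -> forall v : V, derivable (Defs.iterD vs f) a v) /\
  (forall a, U a -> {for a, continuous (Defs.iterD vs f)}).

Lemma iterD_rcons vs v f : Defs.iterD (rcons vs v) f = Defs.iterD vs ('D_v f).
Proof. by rewrite /Defs.iterD foldr_rcons. Qed.

Lemma smoothP U f : smooth_on U f <-> forall k, Pn U k f.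
Proof.
split; first by move=> sf k vs _; exact: sf.
by move=> H vs; apply: (H (size vs)).
Qed.

Lemma loc_iterD U f g : open U -> (forall y, U y -> f y = g y) ->
  forall vs y, U y -> Defs.iterD vs f y = Defs.iterD vs g y.
Proof.
move=> oU fg; elim=> [|v vs IH] y Uy /=; first exact: fg.
have := @near_eq_derive R V _ (Defs.iterD vs f) (Defs.iterD vs g) y v; apply.
apply: (filterS _ (open_nbhs_nbhs (conj oU Uy))) => z Uz.
exact: IH.
Qed.

Lemma Pn_eq U k f g : open U -> (forall y, U y -> f y = g y) -> Pn U k f -> Pn U k g.
Proof.
move=> oU fg P vs hvs; have [d c] := P vs hvs; split.
  move=> a Ua v; apply: near_eq_derivable (d a Ua v).
  apply: (filterS _ (open_nbhs_nbhs (conj oU Ua))) => z Uz.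
  exact: (loc_iterD oU fg).

move=> a Ua.
have e : {near a, Defs.iterD vs f =1 Defs.iterD vs g}.
  apply: (filterS _ (open_nbhs_nbhs (conj oU Ua))) => z Uz.
  exact: (loc_iterD oU fg).

rewrite /prop_for /continuous_at -(loc_iterD oU fg vs Ua).
exact: (cvg_trans (near_eq_cvg e) (c a Ua)).
Qed.

Lemma Pn_D U k f v : Pn U k.+1 f -> Pn U k ('D_v f).
Proof. by move=> P vs hvs; rewrite -iterD_rcons; apply: P; rewrite size_rcons. Qed.

Lemma Pn_W U k f : Pn U k.+1 f -> Pn U k f.
Proof. by move=> P vs hvs; apply: P; apply: leqW. Qed.

Lemma Pn_base U k f : Pn U k f ->
  forall a, U a -> (forall v, derivable f a v) /\ {for a, continuous f}.
Proof. by move=> P a Ua; have [d c] := P [::] isT; split; [exact: d|exact: c]. Qed.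

Lemma Pn_intro U k f :
  (forall a, U a -> (forall v, derivable f a v) /\ {for a, continuous f}) ->
  (forall v, match k with 0%N => True | k'.+1 => Pn U k' ('D_v f) end) ->
  Pn U k f.
Proof.
move=> b D vs; case/lastP: vs => [|vs v] hs.
  by split=> a Ua; have [d c] := b a Ua.
rewrite iterD_rcons; case: k D hs => [|k] D hs; first by rewrite size_rcons in hs.
by apply: D; rewrite size_rcons in hs.
Qed.


Lemma Pn_add U k f g : open U -> Pn U k f -> Pn U k g -> Pn U k (f + g).
Proof.
move=> oU; elim: k f g => [|k IH] f g Pf Pg; apply: Pn_intro.
- move=> a Ua; have [df cf] := Pn_base Pf Ua; have [dg cg] := Pn_base Pg Ua.
  split; [move=> v; exact: derivableD|exact: continuousD].
- by [].
- move=> a Ua; have [df cf] := Pn_base Pf Ua; have [dg cg] := Pn_base Pg Ua.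
  split; [move=> v; exact: derivableD|exact: continuousD].
move=> v; apply: (@Pn_eq U k ('D_v f + 'D_v g)).
- exact: oU.
- move=> y Uy; rewrite deriveD //.
  + by have [df _] := Pn_base Pf Uy.
  + by have [dg _] := Pn_base Pg Uy.
apply: IH; exact: Pn_D.
Qed.

Lemma Pn_mul U k f g : open U -> Pn U k f -> Pn U k g -> Pn U k (f * g).
Proof.
move=> oU; elim: k f g => [|k IH] f g Pf Pg; apply: Pn_intro.
- move=> a Ua; have [df cf] := Pn_base Pf Ua; have [dg cg] := Pn_base Pg Ua.
  split; [move=> v; exact: derivableM|exact: continuousM].
- by [].
- move=> a Ua; have [df cf] := Pn_base Pf Ua; have [dg cg] := Pn_base Pg Ua.
  split; [move=> v; exact: derivableM|exact: continuousM].
move=> v; apply: (@Pn_eq U k (f * 'D_v g + g * 'D_v f)).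
- exact: oU.
- move=> y Uy; rewrite deriveM //.
  + by have [df _] := Pn_base Pf Uy.
  + by have [dg _] := Pn_base Pg Uy.
apply: Pn_add; first exact: oU.
  apply: IH; [exact: Pn_W|exact: Pn_D].
apply: IH; [exact: Pn_W|exact: Pn_D].
Qed.

Lemma Pn_cst U k (c : R) : Pn U k (cst c).
Proof.
elim: k c => [|k IH] c; apply: Pn_intro.
- by move=> a _; split; [move=> v; exact: derivable_cst|exact: cst_continuous].
- by [].
- by move=> a _; split; [move=> v; exact: derivable_cst|exact: cst_continuous].
move=> v; have -> : 'D_v (cst c) = cst 0.
  by apply/funext => y; rewrite derive_cst.
exact: IH.
Qed.
End Smooth.

Section Smooth2.
Context {R : realType} {n : nat}.
Local Notation V := 'rV[R]_n.

Lemma smooth_local (U : set V) (h : V -> R) :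
  (forall u, U u -> exists (W : set V) (h' : V -> R),
     [/\ open W, W u, smooth_on W h' & forall w, W w -> h' w = h w]) ->
  smooth_on U h.
Proof.
move=> H vs; split=> a Ua; have [W [h' [oW Wa sh e]]] := H a Ua;
  move/smoothP: sh => sh; have P := Pn_eq oW e (sh (seq.size vs));
  have [d c] := P vs (leqnn _).
- exact: d.
- exact: c.
Qed.

Lemma smooth_sub (U : set V) (f g : V -> R) : open U ->
  smooth_on U f -> smooth_on U g -> smooth_on U (fun v => f v - g v).
Proof.
move=> oU /smoothP sf /smoothP sg; apply/smoothP => k.
apply: (@Pn_eq _ _ U k (f + (cst (-1)) * g)) => //.
  by move=> y _ /=; rewrite mulN1r.
apply: Pn_add => //.
apply: Pn_mul => //; first exact: Pn_cst.
Qed.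
End Smooth2.


Section G.
Context {R : realType} {X : Type} (D : diffeology R X) (x : X).

Local Notation Dopen := (Dopen D).
Local Notation smooth_fun := (smooth_fun D).
Local Notation valid := (valid D x).
Local Notation germ_rel := (germ_rel D x).
Local Notation cls := (cls D x).

Lemma Dopen_setT : Dopen setT.
Proof.
move=> n U p pl; have -> : [set u | U u /\ setT (p u)] = U.
  by apply/seteqP; split=> u /=; [case|].
exact: plot_open pl.
Qed.

Lemma Dopen_I A B : Dopen A -> Dopen B -> Dopen (A `&` B).
Proof.
move=> hA hB n U p pl.
have -> : [set u | U u /\ (A `&` B) (p u)] =
   [set u | U u /\ A (p u)] `&` [set u | U u /\ B (p u)].
  by apply/seteqP; split=> u /=; [case=> ? []|case=> -[? ?] []].
by apply: openI; [exact: hA pl|exact: hB pl].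
Qed.

Lemma sf_sub A B f : A `<=` B -> smooth_fun B f -> smooth_fun A f.
Proof. by move=> AB sf n U p pl inA; apply: sf pl _ => u /inA /AB. Qed.

Lemma sf_add B f g : smooth_fun B f -> smooth_fun B g ->
  smooth_fun B (fun y => f y + g y).
Proof.
move=> hf hg n U p pl inB; have oU := plot_open pl.
apply/smoothP => k.
exact: (Pn_add oU ((smoothP _ _).1 (hf n U p pl inB) k)
                  ((smoothP _ _).1 (hg n U p pl inB) k)).
Qed.

Lemma sf_mul B f g : smooth_fun B f -> smooth_fun B g ->
  smooth_fun B (fun y => f y * g y).
Proof.
move=> hf hg n U p pl inB; have oU := plot_open pl.
apply/smoothP => k.
exact: (Pn_mul oU ((smoothP _ _).1 (hf n U p pl inB) k)
                  ((smoothP _ _).1 (hg n U p pl inB) k)).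
Qed.

Lemma sf_cst B (c : R) : smooth_fun B (fun _ => c).
Proof. by move=> n U p pl inB; apply/smoothP => k; exact: Pn_cst. Qed.

Lemma rel_sym a b : germ_rel a b -> germ_rel b a.
Proof.
case=> B [oB Bx sB e]; exists B; split=> //.
  by move=> y /sB [? ?].
by move=> y /e.
Qed.

Lemma rel_trans a b c : germ_rel a b -> germ_rel b c -> germ_rel a c.
Proof.
case=> B [oB Bx sB e] [B' [oB' Bx' sB' e']]; exists (B `&` B'); split.
- exact: Dopen_I.
- by [].
- by move=> y [/sB [? _] /sB' [_ ?]].
- by move=> y [yB yB']; rewrite e // e'.
Qed.

Lemma rel_refl a : valid a -> germ_rel a a.
Proof. by case=> oa ax _; exists a.1; split. Qed.

Lemma rel_cls a b : germ_rel a b -> cls a = cls b.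
Proof.
move=> r; apply/seteqP; split=> p [vp rp]; split=> //.
  exact: rel_trans (rel_sym r) rp.
exact: rel_trans r rp.
Qed.

Lemma cls_rel a b : valid b -> cls a = cls b -> germ_rel a b.
Proof.
move=> vb e; have hb : cls b b by split; [exact: vb|exact: rel_refl].
by move: hb; rewrite -e; case.
Qed.

Lemma cls_eq (A A' : set X) (f f' : X -> R) : Dopen A -> A x -> Dopen A' -> A' x ->
  (forall y, A y -> A' y -> f y = f' y) -> cls (A, f) = cls (A', f').
Proof.
move=> oA Ax oA' Ax' e; apply: rel_cls; exists (A `&` A'); split=> //.
- exact: Dopen_I.
- by move=> y [? ?]; apply: e.
Qed.

Lemma valid_cls a : valid a -> cls a a.
Proof. by move=> va; split=> //; exact: rel_refl. Qed.

Lemma op2_cls op a b : valid a -> valid b ->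
  germ_op2 D x op (cls a) (cls b) = cls (a.1 `&` b.1, fun y => op (a.2 y) (b.2 y)).
Proof.
move=> va vb; apply/seteqP; split.
  move=> p [a' [b' [va' vb' ea eb hp]]].
  have [Ba [oBa Bax sBa ea']] := cls_rel va' ea.
  have [Bb [oBb Bbx sBb eb']] := cls_rel vb' eb.
  suff -> : cls (a.1 `&` b.1, fun y => op (a.2 y) (b.2 y)) =
            cls (a'.1 `&` b'.1, fun y => op (a'.2 y) (b'.2 y)) by [].
  apply: rel_cls; exists (Ba `&` Bb); split.
  - exact: Dopen_I.
  - by [].
  - move=> y [/sBa [? ?] /sBb [? ?]]; by split; split.
  - by move=> y [yBa yBb] /=; rewrite ea' // eb'.
by move=> p hp; exists a, b; split.
Qed.

Lemma scale_cls k a : valid a ->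
  germ_scale D x k (cls a) = cls (a.1, fun y => k * a.2 y).
Proof.
move=> va; apply/seteqP; split.
  move=> p [a' [va' ea hp]].
  have [Ba [oBa Bax sBa ea']] := cls_rel va' ea.
  suff -> : cls (a.1, fun y => k * a.2 y) = cls (a'.1, fun y => k * a'.2 y) by [].
  apply: rel_cls; exists Ba; split => //.
  by move=> y yB /=; rewrite ea'.
by move=> p hp; exists a; split.
Qed.

Lemma ev_cls a : valid a -> germ_ev D x (cls a) = a.2 x.
Proof.
move=> va; rewrite /germ_ev.
set P := (X in xget _ X).
have : P (xget 0 P) by apply: xgetPex; exists (a.2 x), a; split.
case=> a' [va' e ->].
by have [B [_ Bx _ eB]] := cls_rel va' e; rewrite eB.
Qed.

Lemma valid_cst c : valid (setT, fun _ => c).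
Proof. split=> //=; [exact: Dopen_setT|exact: sf_cst]. Qed.

Lemma valid_add a b : valid a -> valid b ->
  valid (a.1 `&` b.1, fun y => a.2 y + b.2 y).
Proof.
case=> oa ax sa [ob bx sb]; split=> /=; first exact: Dopen_I.
  by [].
by apply: sf_add; [apply: sf_sub sa|apply: sf_sub sb]; move=> y [].
Qed.

Lemma valid_mul a b : valid a -> valid b ->
  valid (a.1 `&` b.1, fun y => a.2 y * b.2 y).
Proof.
case=> oa ax sa [ob bx sb]; split=> /=; first exact: Dopen_I.
  by [].
by apply: sf_mul; [apply: sf_sub sa|apply: sf_sub sb]; move=> y [].
Qed.

Lemma valid_scale k a : valid a -> valid (a.1, fun y => k * a.2 y).
Proof. by case=> oa ax sa; split=> //=; apply: sf_mul => //; exact: sf_cst. Qed.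

Lemma valid_Dopen a : valid a -> Dopen a.1. Proof. by case. Qed.
Lemma valid_x a : valid a -> a.1 x. Proof. by case. Qed.

Local Notation gadd := (germ_add D x).
Local Notation gmul := (germ_mul D x).
Local Notation gscale := (germ_scale D x).
Local Notation gev := (germ_ev D x).
Local Notation g0 := (germ0 D x).
Local Notation is_germ := (is_germ D x).
Definition germ_one := cls (setT, fun _ => 1).

Lemma add_cls a b : valid a -> valid b ->
  gadd (cls a) (cls b) = cls (a.1 `&` b.1, fun y => a.2 y + b.2 y).
Proof. exact: op2_cls. Qed.
Lemma mul_cls a b : valid a -> valid b ->
  gmul (cls a) (cls b) = cls (a.1 `&` b.1, fun y => a.2 y * b.2 y).
Proof. exact: op2_cls. Qed.

Ltac vt := solve [repeat first [eassumption | apply: valid_add | apply: valid_mul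
   | apply: valid_scale | apply: valid_cst]].
Ltac gs := repeat first [ rewrite add_cls; [|vt|vt] | rewrite mul_cls; [|vt|vt]
   | rewrite scale_cls; [|vt] ].
Ltac ds := repeat first [ eassumption | progress simpl | apply: Dopen_I | apply: Dopen_setT
   | apply: valid_Dopen; eassumption | apply: valid_x; eassumption | split ].
Ltac geq := gs; apply: cls_eq; [ds|ds|ds|ds|move=> ? _ _ /=].

Lemma germ_ex c : is_germ c -> exists a, valid a /\ c = cls a.
Proof. by []. Qed.

Lemma is_germ_cls a : valid a -> is_germ (cls a).
Proof. by move=> va; exists a. Qed.

Lemma is_germ0 : is_germ g0. Proof. exact/is_germ_cls/valid_cst. Qed.
Lemma is_germ1 : is_germ germ_one. Proof. exact/is_germ_cls/valid_cst. Qed.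
Lemma is_germ_add c d : is_germ c -> is_germ d -> is_germ (gadd c d).
Proof. by move=> [a [va ->]] [b [vb ->]]; gs; apply: is_germ_cls; vt. Qed.
Lemma is_germ_mul c d : is_germ c -> is_germ d -> is_germ (gmul c d).
Proof. by move=> [a [va ->]] [b [vb ->]]; gs; apply: is_germ_cls; vt. Qed.
Lemma is_germ_scale k c : is_germ c -> is_germ (gscale k c).
Proof. by move=> [a [va ->]]; gs; apply: is_germ_cls; vt. Qed.

Lemma add_assoc c d e : is_germ c -> is_germ d -> is_germ e ->
  gadd (gadd c d) e = gadd c (gadd d e).
Proof. by move=> [a [va ->]] [b [vb ->]] [f [vf ->]]; geq; ring. Qed.

Lemma add0g d : is_germ d -> gadd g0 d = d.
Proof. by move=> [a [va ->]]; rewrite /germ0; geq; ring. Qed.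

Lemma addg0 d : is_germ d -> gadd d g0 = d.
Proof. by move=> [a [va ->]]; rewrite /germ0; geq; ring. Qed.

Lemma scale_g0 k : gscale k g0 = g0.
Proof. by rewrite /germ0; geq; ring. Qed.

Lemma scale_add k c d : is_germ c -> is_germ d ->
  gscale k (gadd c d) = gadd (gscale k c) (gscale k d).
Proof. by move=> [a [va ->]] [b [vb ->]]; geq; ring. Qed.

Lemma scale_mul k c d : is_germ c -> is_germ d ->
  gscale k (gmul c d) = gmul (gscale k c) d.
Proof. by move=> [a [va ->]] [b [vb ->]]; geq; ring. Qed.

Lemma subself c : is_germ c -> gadd c (gscale (-1) c) = g0.
Proof. by move=> [a [va ->]]; rewrite /germ0; geq; ring. Qed.

Lemma ev_add c d : is_germ c -> is_germ d -> gev (gadd c d) = gev c + gev d.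
Proof. by move=> [a [va ->]] [b [vb ->]]; gs; rewrite !ev_cls //; vt. Qed.
Lemma ev_mul c d : is_germ c -> is_germ d -> gev (gmul c d) = gev c * gev d.
Proof. by move=> [a [va ->]] [b [vb ->]]; gs; rewrite !ev_cls //; vt. Qed.
Lemma ev_scale k c : is_germ c -> gev (gscale k c) = k * gev c.
Proof. by move=> [a [va ->]]; gs; rewrite !ev_cls //; vt. Qed.
Lemma ev0 : gev g0 = 0. Proof. by rewrite ev_cls //; vt. Qed.
Lemma ev1 : gev germ_one = 1. Proof. by rewrite ev_cls //; vt. Qed.

Local Notation Ix := (Ix D x).
Local Notation Ix2 := (Ix2 D x).
Local Notation qcls := (qcls D x).

Lemma Ix_add c d : Ix c -> Ix d -> Ix (gadd c d).
Proof.
by move=> [gc ec] [gd ed]; split; [exact: is_germ_add|rewrite ev_add // ec ed addr0].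
Qed.
Lemma Ix_scale k c : Ix c -> Ix (gscale k c).
Proof. by move=> [gc ec]; split; [exact: is_germ_scale|rewrite ev_scale // ec mulr0]. Qed.
Lemma Ix_mul c d : Ix c -> is_germ d -> Ix (gmul c d).
Proof. by move=> [gc ec] gd; split; [exact: is_germ_mul|rewrite ev_mul // ec mul0r]. Qed.
Lemma Ix0 : Ix g0. Proof. by split; [exact: is_germ0|exact: ev0]. Qed.

Definition Fs (s : seq (set (@pre R X) * set (@pre R X))) :=
  foldr (fun gh acc => gadd (gmul gh.1 gh.2) acc) g0 s.

Definition okl (s : seq (set (@pre R X) * set (@pre R X))) :=
  forall gh, gh \in s -> Ix gh.1 /\ Ix gh.2.

Lemma okl_cons gh s : okl (gh :: s) -> Ix gh.1 /\ Ix gh.2 /\ okl s.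
Proof.
move=> h; have [h1 h2] := h gh (mem_head _ _); split=> //; split=> //.
by move=> gh' hin; apply: h; rewrite inE hin orbT.
Qed.

Lemma Fs_germ s : okl s -> is_germ (Fs s).
Proof.
elim: s => [|gh s IH] /=; first by move=> _; exact: is_germ0.
move=> /okl_cons [[g1 _] [[g2 _] ok]].
by apply: is_germ_add; [exact: is_germ_mul|exact: IH].
Qed.

Lemma Ix2_germ c : Ix2 c -> is_germ c.
Proof. by case=> s [ok ->]; exact: Fs_germ. Qed.

Lemma Fs_cat s1 s2 : okl (s1 ++ s2) -> Fs (s1 ++ s2) = gadd (Fs s1) (Fs s2).
Proof.
elim: s1 => [|gh s1 IH] /= ok; first by rewrite add0g //; exact: Fs_germ.
have [[g1 _] [[g2 _] ok']] := okl_cons ok.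
have ok1 : okl s1 by move=> u hu; apply: ok'; rewrite mem_cat hu.
have ok2 : okl s2 by move=> u hu; apply: ok'; rewrite mem_cat hu orbT.
rewrite IH // add_assoc //; [exact: is_germ_mul|exact: Fs_germ|exact: Fs_germ].
Qed.

Lemma Ix2_add c d : Ix2 c -> Ix2 d -> Ix2 (gadd c d).
Proof.
move=> [s1 [ok1 ->]] [s2 [ok2 ->]].
have ok : okl (s1 ++ s2) by move=> u; rewrite mem_cat => /orP [/ok1|/ok2].
by exists (s1 ++ s2); split=> //; exact: (esym (Fs_cat ok)).
Qed.

Lemma Ix2_scale k c : Ix2 c -> Ix2 (gscale k c).
Proof.
move=> [s [ok ->]]; exists (map (fun gh => (gscale k gh.1, gh.2)) s); split.
  move=> u /mapP [gh hin ->] /=; have [h1 h2] := ok gh hin.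
  by split=> //; exact: Ix_scale.
elim: s ok => [|gh s IH] ok /=; first by rewrite scale_g0.
have [[g1 e1] [[g2 e2] ok']] := okl_cons ok.
rewrite -IH // scale_add ?scale_mul //; [exact: is_germ_mul|exact: Fs_germ].
Qed.

Lemma Ix2_0 : Ix2 g0. Proof. by exists [::]. Qed.

Lemma Ix2_mul g h : Ix g -> Ix h -> Ix2 (gmul g h).
Proof.
move=> ig ih; exists [:: (g, h)]; split.
  by move=> u; rewrite inE => /eqP ->.
rewrite /= addg0 //; apply: is_germ_mul; [exact: ig.1|exact: ih.1].
Qed.

End G.


Section H.
Context {R : realType} {X : Type} (D : diffeology R X) (x : X).

Local Notation Dopen := (Dopen D).
Local Notation smooth_fun := (smooth_fun D).
Local Notation valid := (valid D x).
Local Notation cls := (cls D x).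
Local Notation gadd := (germ_add D x).
Local Notation gmul := (germ_mul D x).
Local Notation gscale := (germ_scale D x).
Local Notation gev := (germ_ev D x).
Local Notation g0 := (germ0 D x).
Local Notation is_germ := (is_germ D x).
Local Notation Ix := (Ix D x).
Local Notation Ix2 := (Ix2 D x).
Local Notation qcls := (qcls D x).


Ltac vt := solve [repeat first [eassumption | apply: valid_add | apply: valid_mul
   | apply: valid_scale | apply: valid_cst]].
Ltac gs := repeat first [ rewrite add_cls; [|vt|vt] | rewrite mul_cls; [|vt|vt]
   | rewrite scale_cls; [|vt] ].
Ltac ds := repeat first [ eassumption | progress simpl | apply: Dopen_I | apply: Dopen_setT
   | apply: valid_Dopen; eassumption | apply: valid_x; eassumption | split ].
Ltac geq := gs; apply: cls_eq; [ds|ds|ds|ds|move=> ? _ _ /=].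

Lemma id7 c d e : is_germ c -> is_germ d -> is_germ e ->
  gadd c (gscale (-1) e) =
  gadd (gadd c (gscale (-1) d)) (gadd d (gscale (-1) e)).
Proof. by move=> [a [va ->]] [b [vb ->]] [f [vf ->]]; geq; ring. Qed.

Lemma id7' c d e : is_germ c -> is_germ d -> is_germ e ->
  gadd c (gscale (-1) d) =
  gadd (gadd c (gscale (-1) e)) (gscale (-1) (gadd d (gscale (-1) e))).
Proof. by move=> [a [va ->]] [b [vb ->]] [f [vf ->]]; geq; ring. Qed.

Lemma id8 a b c d : is_germ a -> is_germ b -> is_germ c -> is_germ d ->
  gadd (gadd a b) (gscale (-1) (gadd c d)) =
  gadd (gadd a (gscale (-1) c)) (gadd b (gscale (-1) d)).
Proof.
by move=> [a1 [va1 ->]] [b1 [vb1 ->]] [c1 [vc1 ->]] [d1 [vd1 ->]]; geq; ring.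
Qed.

Lemma id9 k a c : is_germ a -> is_germ c ->
  gadd (gscale k a) (gscale (-1) (gscale k c)) =
  gscale k (gadd a (gscale (-1) c)).
Proof. by move=> [a1 [va1 ->]] [c1 [vc1 ->]]; geq; ring. Qed.

Lemma qcls_refl g : Ix g -> qcls g g.
Proof. by move=> ig; split=> //; rewrite subself; [exact: Ix2_0|exact: ig.1]. Qed.

Lemma qcls_eq g g' : Ix g -> Ix g' -> Ix2 (gadd g' (gscale (-1) g)) ->
  qcls g' = qcls g.
Proof.
move=> ig ig' h; apply/seteqP; split=> d [id hd]; split=> //.
  rewrite (@id7 d g' g); [|exact: id.1|exact: ig'.1|exact: ig.1].
  exact: Ix2_add.
rewrite (@id7' d g' g); [|exact: id.1|exact: ig'.1|exact: ig.1].
by apply: Ix2_add => //; exact: Ix2_scale.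
Qed.

Lemma qcls_Ix2 g g' : Ix g' -> qcls g' = qcls g -> Ix2 (gadd g' (gscale (-1) g)).
Proof.
move=> ig' e; have h : qcls g g' by rewrite -e; exact: qcls_refl.
by case: h.
Qed.

Lemma q_add_q g h : Ix g -> Ix h ->
  q_add D x (qcls g) (qcls h) = qcls (gadd g h).
Proof.
move=> ig ih; apply/seteqP; split.
  move=> c [g' [h' [ig' ih' eg eh hc]]].
  suff <- : qcls (gadd g' h') = qcls (gadd g h) by [].
  apply: qcls_eq; [exact: Ix_add|exact: Ix_add|].
  rewrite id8; [|exact: ig'.1|exact: ih'.1|exact: ig.1|exact: ih.1].
  by apply: Ix2_add; apply: qcls_Ix2.
by move=> c hc; exists g, h; split.
Qed.

Lemma q_scale_q k g : Ix g -> q_scale D x k (qcls g) = qcls (gscale k g).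
Proof.
move=> ig; apply/seteqP; split.
  move=> c [g' [ig' eg hc]].
  suff <- : qcls (gscale k g') = qcls (gscale k g) by [].
  apply: qcls_eq; [exact: Ix_scale|exact: Ix_scale|].
  rewrite id9; [|exact: ig'.1|exact: ig.1].
  by apply: Ix2_scale; apply: qcls_Ix2.
by move=> c hc; exists g; split.
Qed.

Section F.
Variable F : set (@pre R X) -> R.
Hypothesis hF : That D x F.

Lemma F_add c d : is_germ c -> is_germ d -> F (gadd c d) = F c + F d.
Proof. by case: hF => _ h _ _; exact: h. Qed.
Lemma F_scale k c : is_germ c -> F (gscale k c) = k * F c.
Proof. by case: hF => _ _ h _; exact: h. Qed.
Lemma F_mul c d : is_germ c -> is_germ d -> F (gmul c d) = F c * gev d + gev c * F d.
Proof. by case: hF => _ _ _ h; exact: h. Qed.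

Lemma F_g0 : F g0 = 0.
Proof. by rewrite -(scale_g0 D x 0) F_scale ?mul0r //; exact: is_germ0. Qed.

Lemma F_Ix2 c : Ix2 c -> F c = 0.
Proof.
case=> s [ok ->]; elim: s ok => [|gh s IH] ok /=; first exact: F_g0.
have [[g1 e1] [[g2 e2] ok']] := okl_cons ok.
rewrite F_add; [|exact: is_germ_mul|exact: (Fs_germ ok')].
by rewrite F_mul // e1 e2 IH // !mulr0 mul0r !addr0.
Qed.

Lemma F_sub c g : is_germ c -> is_germ g -> F (gadd c (gscale (-1) g)) = F c - F g.
Proof.
move=> gc gg; rewrite F_add //; last exact: is_germ_scale.
by rewrite F_scale // mulN1r.
Qed.

Lemma F_qcls g c : Ix g -> qcls g c -> F c = F g.
Proof.
move=> ig [ic h]; have := F_Ix2 h; rewrite F_sub; [|exact: ic.1|exact: ig.1].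
by move/eqP; rewrite subr_eq0 => /eqP.
Qed.

Lemma alpha_q g : Ix g -> alpha D x F (qcls g) = F g.
Proof.
move=> ig; rewrite /alpha; apply: F_qcls => //.
by apply: xgetPex; exists g; exact: qcls_refl.
Qed.

End F.
End H.


Section M.
Context {R : realType} {X : Type} (D : diffeology R X) (x : X).

Local Notation Dopen := (Dopen D).
Local Notation smooth_fun := (smooth_fun D).
Local Notation valid := (valid D x).
Local Notation cls := (cls D x).
Local Notation gadd := (germ_add D x).
Local Notation gmul := (germ_mul D x).
Local Notation gscale := (germ_scale D x).
Local Notation gev := (germ_ev D x).
Local Notation g0 := (germ0 D x).
Local Notation is_germ := (is_germ D x).
Local Notation Ix := (Ix D x).
Local Notation Ix2 := (Ix2 D x).
Local Notation qcls := (qcls D x).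
Local Notation one := (germ_one D x).


Ltac vt := solve [repeat first [eassumption | apply: valid_add | apply: valid_mul
   | apply: valid_scale | apply: valid_cst]].
Ltac gs := repeat first [ rewrite add_cls; [|vt|vt] | rewrite mul_cls; [|vt|vt]
   | rewrite scale_cls; [|vt] ].
Ltac ds := repeat first [ eassumption | progress simpl | apply: Dopen_I | apply: Dopen_setT
   | apply: valid_Dopen; eassumption | apply: valid_x; eassumption | split ].
Ltac geq := gs; apply: cls_eq; [ds|ds|ds|ds|move=> ? _ _ /=].

Lemma idA c e : is_germ c -> gadd (gadd c (gscale (-e) one)) (gscale e one) = c.
Proof. by move=> [a [va ->]]; rewrite /germ_one; geq; ring. Qed.

Lemma idB : gmul one one = one.
Proof. by rewrite /germ_one; geq; ring. Qed.

Lemma idC c d e1 e2 : is_germ c -> is_germ d ->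
  gadd (gadd c d) (gscale (-(e1 + e2)) one) =
  gadd (gadd c (gscale (-e1) one)) (gadd d (gscale (-e2) one)).
Proof. by move=> [a [va ->]] [b [vb ->]]; rewrite /germ_one; geq; ring. Qed.

Lemma idD c k e : is_germ c ->
  gadd (gscale k c) (gscale (-(k * e)) one) = gscale k (gadd c (gscale (-e) one)).
Proof. by move=> [a [va ->]]; rewrite /germ_one; geq; ring. Qed.

Lemma idE c d e1 e2 : is_germ c -> is_germ d ->
  gadd (gmul c d) (gscale (-(e1 * e2)) one) =
  gadd (gmul (gadd c (gscale (-e1) one)) (gadd d (gscale (-e2) one)))
       (gadd (gscale e1 (gadd d (gscale (-e2) one)))
             (gscale e2 (gadd c (gscale (-e1) one)))).
Proof. by move=> [a [va ->]] [b [vb ->]]; rewrite /germ_one; geq; ring. Qed.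

Lemma idF m : is_germ m -> gadd m (gscale (-1) g0) = m.
Proof. by move=> [a [va ->]]; rewrite /germ0; geq; ring. Qed.

Lemma idG g : is_germ g -> gadd g (gscale (-0) one) = g.
Proof. by move=> [a [va ->]]; rewrite /germ_one; geq; ring. Qed.

Definition devg c := gadd c (gscale (- gev c) one).

Lemma dev_Ix c : is_germ c -> Ix (devg c).
Proof.
move=> gc; split; first by apply: is_germ_add => //; apply: is_germ_scale; exact: is_germ1.
rewrite /devg ev_add //; last by apply: is_germ_scale; exact: is_germ1.
by rewrite ev_scale ?ev1 ?mulr1 ?addrN //; exact: is_germ1.
Qed.

End M.


Section N.
Context {R : realType} {X : Type} (D : diffeology R X) (x : X).

Local Notation Dopen := (Dopen D).
Local Notation smooth_fun := (smooth_fun D).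
Local Notation valid := (valid D x).
Local Notation cls := (cls D x).
Local Notation gadd := (germ_add D x).
Local Notation gmul := (germ_mul D x).
Local Notation gscale := (germ_scale D x).
Local Notation gev := (germ_ev D x).
Local Notation g0 := (germ0 D x).
Local Notation is_germ := (is_germ D x).
Local Notation Ix := (Ix D x).
Local Notation Ix2 := (Ix2 D x).
Local Notation qcls := (qcls D x).
Local Notation one := (germ_one D x).
Local Notation dev := (devg D x).


Ltac vt := solve [repeat first [eassumption | apply: valid_add | apply: valid_mul
   | apply: valid_scale | apply: valid_cst]].
Ltac gs := repeat first [ rewrite add_cls; [|vt|vt] | rewrite mul_cls; [|vt|vt]
   | rewrite scale_cls; [|vt] ].
Ltac ds := repeat first [ eassumption | progress simpl | apply: Dopen_I | apply: Dopen_setT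
   | apply: valid_Dopen; eassumption | apply: valid_x; eassumption | split ].
Ltac geq := gs; apply: cls_eq; [ds|ds|ds|ds|move=> ? _ _ /=].

Lemma part1 F : That D x F -> Tprime D x (alpha D x F).
Proof.
move=> hF; split.
- move=> n U Xi [oU isq loc]; apply: smooth_local => u Uu.
  have [W [P [oW Wu WU gp e]]] := loc u Uu.
  exists W, (F \o P); split=> //.
    by case: hF => hs _ _ _; exact: hs _ _ _ gp.
  move=> w Ww; have [iP eX] := e w Ww; rewrite /comp eX.
  by rewrite (alpha_q hF iP).
- move=> xi eta [g [ig ->]] [h [ih ->]].
  rewrite (q_add_q ig ih) (alpha_q hF (Ix_add ig ih)) (alpha_q hF ig) (alpha_q hF ih).
  exact: (F_add hF ig.1 ih.1).
- move=> k xi [g [ig ->]].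
  rewrite (q_scale_q k ig) (alpha_q hF (Ix_scale k ig)) (alpha_q hF ig).
  exact: (F_scale hF k ig.1).
Qed.

Lemma F_one F : That D x F -> F one = 0.
Proof.
move=> hF; have := F_mul hF (is_germ1 D x) (is_germ1 D x).
rewrite idB ev1 mulr1 mul1r => h.
have := congr1 (fun z => z - F one) h; rewrite subrr addrK => h'.
by rewrite -h'.
Qed.

Lemma part3 F1 F2 : That D x F1 -> That D x F2 ->
  (forall xi, is_q D x xi -> alpha D x F1 xi = alpha D x F2 xi) ->
  forall c, is_germ c -> F1 c = F2 c.
Proof.
move=> h1 h2 ha c gc.
have ig := dev_Ix gc.
have e : c = gadd (dev c) (gscale (gev c) one) by rewrite /devg idA.
have g1 : is_germ (gscale (gev c) one) by apply: is_germ_scale; exact: is_germ1.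
rewrite e (F_add h1 ig.1 g1) (F_add h2 ig.1 g1).
rewrite (F_scale h1 _ (is_germ1 D x)) (F_scale h2 _ (is_germ1 D x)) (F_one h1) (F_one h2).
by rewrite -(alpha_q h1 ig) -(alpha_q h2 ig) ha //; exists (dev c).
Qed.

Section T.
Variable T : set (set (@pre R X)) -> R.
Hypothesis hT : Tprime D x T.

Lemma T_add g h : Ix g -> Ix h -> T (qcls (gadd g h)) = T (qcls g) + T (qcls h).
Proof.
move=> ig ih; rewrite -(q_add_q ig ih).
by case: hT => _ ha _; apply: ha; [exists g|exists h].
Qed.

Lemma T_scale k g : Ix g -> T (qcls (gscale k g)) = k * T (qcls g).
Proof.
move=> ig; rewrite -(q_scale_q k ig).
by case: hT => _ _ hs; apply: hs; exists g.
Qed.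

Lemma T_g0 : T (qcls g0) = 0.
Proof. by rewrite -{1}(scale_g0 D x 0) (T_scale 0 (Ix0 D x)) mul0r. Qed.

Lemma T_mul g h : Ix g -> Ix h -> T (qcls (gmul g h)) = 0.
Proof.
move=> ig ih.
have im : Ix (gmul g h) by apply: Ix_mul => //; exact: ih.1.
rewrite (qcls_eq (Ix0 D x) im) ?T_g0 //.
by rewrite idF; [exact: Ix2_mul|exact: im.1].
Qed.

Definition Fdef c := T (qcls (dev c)).

Lemma Fdef_That : That D x Fdef.
Proof.
have g1 := is_germ1 D x.
split.
- move=> n U P gp; have [oU isg loc] := gp.
  case: hT => hs _ _.
  apply: (hs n U (fun u => qcls (dev (P u)))); split=> //.
    by move=> u Uu; exists (dev (P u)); split=> //; exact: dev_Ix (isg u Uu).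
  move=> u Uu; have [W [oW Wu WU hd]] := loc u Uu.
  exists W, (fun w => dev (P w)); split=> //; last first.
    by move=> w Ww; split=> //; exact: dev_Ix (isg w (WU w Ww)).
  split=> //.
    by move=> w Ww; exact: (dev_Ix (isg w (WU w Ww))).1.
  move=> w Ww; exists W; split=> //.
  case: hd => [[c hc]|[B [Q [oB Bx fp hPQ]]]].
    by left; exists (dev c) => w' Ww'; rewrite hc.
  right; exists B, (fun w y => Q w y - Q w x); split=> //.
    case: fp => oW' sQ pQ; split=> //.
      by move=> w' Ww'; apply: sf_add; [exact: sQ|exact: sf_cst].
    move=> m V q1 q2 oV sq1 q1W pl q2B.
    apply: smooth_sub => //; first exact: pQ.
    exact: (pQ m V q1 (fun _ => x) oV sq1 q1W (plot_const D x oV) (fun _ _ => Bx)).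
  move=> w' Ww'; rewrite hPQ //.
  case: fp => _ sQ _.
  have va : valid (B, Q w') by split=> //; exact: sQ.
  rewrite /devg (ev_cls va) /germ_one; geq; ring.
- move=> c d gc gd; rewrite /Fdef.
  have -> : dev (gadd c d) = gadd (dev c) (dev d).
    by rewrite /devg (ev_add gc gd) idC.
  exact: T_add (dev_Ix gc) (dev_Ix gd).
- move=> k c gc; rewrite /Fdef.
  have -> : dev (gscale k c) = gscale k (dev c).
    by rewrite /devg (ev_scale k gc) idD.
  exact: T_scale (dev_Ix gc).
- move=> c d gc gd; rewrite /Fdef.
  have -> : dev (gmul c d) = gadd (gmul (dev c) (dev d))
        (gadd (gscale (gev c) (dev d)) (gscale (gev d) (dev c))).
    by rewrite /devg (ev_mul gc gd) idE.
  have ic := dev_Ix gc; have id := dev_Ix gd.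
  rewrite (T_add (Ix_mul ic id.1) (Ix_add (Ix_scale _ id) (Ix_scale _ ic))).
  rewrite (T_add (Ix_scale _ id) (Ix_scale _ ic)) (T_scale _ id) (T_scale _ ic).
  rewrite (T_mul ic id) add0r addrC mulrC.
  by [].
Qed.

Lemma Fdef_alpha xi : is_q D x xi -> alpha D x Fdef xi = T xi.
Proof.
move=> [g [ig ->]]; rewrite (alpha_q Fdef_That ig) /Fdef /devg.
by rewrite ig.2 idG //; exact: ig.1.
Qed.

End T.

End N.

Unset Implicit Arguments.

Theorem proposition3p11 (R : realType) (X : Type) (D : diffeology R X) (x : X) :
  (* alpha maps That_x(X) into T'_x(X) *)
  (forall F, That D x F -> Tprime D x (alpha D x F)) /\
  (* alpha is linear *)
  (forall (k : R) F1 F2, That D x F1 -> That D x F2 ->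
     forall xi, is_q D x xi ->
       alpha D x (fun c => k * F1 c + F2 c) xi
       = k * alpha D x F1 xi + alpha D x F2 xi) /\
  (* alpha is injective *)
  (forall F1 F2, That D x F1 -> That D x F2 ->
     (forall xi, is_q D x xi -> alpha D x F1 xi = alpha D x F2 xi) ->
     forall c, is_germ D x c -> F1 c = F2 c) /\
  (* alpha is surjective *)
  (forall T, Tprime D x T ->
     exists F, That D x F /\ forall xi, is_q D x xi -> alpha D x F xi = T xi).
Proof.
split; first by move=> F hF; exact: part1 hF.
split; first by [].
split; first by move=> F1 F2 h1 h2 ha c gc; exact: part3 h1 h2 ha c gc.
move=> T hT; exists (Fdef D x T); split; [exact: Fdef_That hT|exact: Fdef_alpha hT].
Qed.
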